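(* Let $\mathbb{F}$ be a field of characteristic not $2$. The map $w\mapsto w^3$ belongs to $SD(\mathbb{F})\setminus\operatorname{Aut}(\mathbb{F})$ if and only if $\mathbb{F}=\mathbb{F}_5$.
   Context: For fields $\mathbb{F},\widetilde{\mathbb{F}}$, a map $f:\mathbb{F}\to\widetilde{\mathbb{F}}$ is called an SD-map if for all $x\neq y$ in $\mathbb{F}$ one has $f(x)\neq f(y)$ and \[ f\left(\frac{x+y}{x-y}\right)=\frac{f(x)+f(y)}{f(x)-f(y)}. \] For a field $\mathbb{F}$, $SD(\mathbb{F})$ denotes the set of surjective SD-maps $f:\mathbb{F}\to\mathbb{F}$. $\operatorname{Aut}(\mathbb{F})$ is the group of field automorphisms of $\mathbb{F}$; $\mathbb{F}_5$ is the field with $5$ elements. *)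

(* Defs.v *)
From mathcomp Require Import all_boot all_algebra.
Set Implicit Arguments. Unset Strict Implicit. Unset Printing Implicit Defensive.
Import GRing.Theory.
Local Open Scope ring_scope.

Definition SD_map (F F' : fieldType) (f : F -> F') : Prop :=
  forall x y : F, x != y ->
    f x != f y /\ f ((x + y) / (x - y)) = (f x + f y) / (f x - f y).

Definition in_SD (F : fieldType) (f : F -> F) : Prop :=
  SD_map f /\ (forall z : F, exists x : F, f x = z).

Definition is_field_aut (F : fieldType) (f : F -> F) : Prop :=
  [/\ bijective f,
      (forall x y : F, f (x + y) = f x + f y),
      (forall x y : F, f (x * y) = f x * f y) & f 1 = 1].

Definition iso_to_F5 (F : fieldType) : Prop :=
  exists g : 'F_5 -> F, [/\ bijective g,
      (forall x y, g (x + y) = g x + g y),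
      (forall x y, g (x * y) = g x * g y) & g 1 = 1].

(* Main.v *)
Require Import Defs.
From mathcomp Require Import all_boot all_algebra.
From mathcomp Require Import ring.
Import GRing.Theory.
Local Open Scope ring_scope.

Lemma bij_of (A B : choiceType) (f : A -> B) :
  injective f -> (forall z, exists x, f x = z) -> bijective f.
Proof.
move=> inj sur.
have ex z : exists x, f x == z by have [x <-] := sur z; exists x.
exists (fun z => xchoose (ex z)) => [x|z]; last exact/eqP/(xchooseP (ex z)).
by apply: inj; apply/eqP/(xchooseP (ex (f x))).
Qed.

Lemma F5_SD (a b : 'F_5) : (a != b) ==> ((a^+3 != b^+3) &&
   (((a+b)/(a-b))^+3 == (a^+3+b^+3)/(a^+3-b^+3))).
Proof. case: a => [[|[|[|[|[|?]]]]] Ha] //; case: b => [[|[|[|[|[|?]]]]] Hb] //. Qed.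

Lemma F5_surj (a : 'F_5) : exists b : 'F_5, b ^+3 = a.
Proof. case: a => [[|[|[|[|[|?]]]]] Ha] //.
 by exists 0; apply: val_inj. by exists 1; apply: val_inj.
 by exists (inZp 3); apply: val_inj. by exists (inZp 2); apply: val_inj.
 by exists (inZp 4); apply: val_inj. Qed.

Lemma back (F : fieldType) : iso_to_F5 F ->
  (in_SD (fun w : F => w ^+ 3) /\ ~ is_field_aut (fun w : F => w ^+ 3)).
Proof.
case=> g [gb gD gM g1].
have ginj := bij_inj gb.
have g0 : g 0 = 0.
  have h := gD 0 0; rewrite addr0 in h.
  by apply: (addrI (g 0)); rewrite -h addr0.
have gN a : g (- a) = - g a.
  apply: (addrI (g a)); by rewrite -gD !subrr g0.
have gB a b : g (a - b) = g a - g b by rewrite gD gN.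
have gX a n : g (a ^+ n) = g a ^+ n.
  by elim: n => [|n IH]; rewrite ?expr0 // !exprS gM IH.
have gV a : g (a^-1) = (g a)^-1.
  have [->|a0] := eqVneq a 0; first by rewrite invr0 g0 invr0.
  have ga0 : g a != 0 by apply: contra a0 => /eqP; rewrite -g0 => /ginj ->.
  by apply: (mulfI ga0); rewrite -gM mulfV // divff // g1.
have gdiv a b : g (a / b) = g a / g b by rewrite gM gV.
case: (gb) => h gh hg.
split; last first.
  case=> _ D _ _; have := D (g 1) (g 1).
  rewrite -gD -gX -gX -gD => /ginj/eqP; by [].
split.
  move=> x y nxy; rewrite -(hg x) -(hg y).
  have nab : h x != h y by apply: contra nxy => /eqP e; rewrite -(hg x) -(hg y) e.
  have := F5_SD (h x) (h y); rewrite nab /= => /andP[ne3 /eqP e].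
  split.
    rewrite -!gX; apply: contra ne3 => /eqP/ginj ->; by [].
  have : g (((h x + h y) / (h x - h y)) ^+ 3) =
         g ((h x ^+ 3 + h y ^+ 3) / (h x ^+ 3 - h y ^+ 3)) by rewrite e.
  by rewrite gX gdiv gD gB gdiv gD gB !gX.
move=> z; have [b hb] := F5_surj (h z).
by exists (g b); rewrite -gX hb hg.
Qed.

Theorem theorem1p6 (F : fieldType) (hchar : (2%:R : F) != 0) :
  (in_SD (fun w : F => w ^+ 3) /\ ~ is_field_aut (fun w : F => w ^+ 3))
  <-> iso_to_F5 F.
Proof.
split; last exact: back.
case=> [[SD sur] naut].
have inj : injective (fun w : F => w ^+ 3).
  move=> x y e; apply/eqP; apply: contraT => nxy.
  by have [h _] := SD x y nxy; rewrite e eqxx in h.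
have h3 : (3%:R : F) != 0.
  apply/negP => /eqP h3; apply: naut; split.
  - exact: bij_of.
  - move=> x y.
    have -> : (x + y) ^+ 3 = x ^+ 3 + y ^+ 3 + 3%:R * (x * y * (x + y)) by ring.
    by rewrite h3 mul0r addr0.
  - by move=> x y; rewrite exprMn.
  - by rewrite expr1n.
have key (t : F) : t != 1 -> (t ^+ 2 - 1) * (6%:R * t * (t ^+ 2 + 1)) = 0.
  move=> t1; have [ne e] := SD t 1 t1.
  rewrite expr1n in ne e.
  have t10 : t - 1 != 0 by rewrite subr_eq0.
  have t30 : t ^+ 3 - 1 != 0 by rewrite subr_eq0.
  rewrite expr_div_n in e.
  move/eqP: e; rewrite eqr_div ?expf_neq0 // => /eqP e.
  have -> : (t ^+ 2 - 1) * (6%:R * t * (t ^+ 2 + 1)) =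
     (t + 1) ^+ 3 * (t ^+ 3 - 1) - (t ^+ 3 + 1) * (t - 1) ^+ 3 by ring.
  by rewrite e subrr.
have h21 : (2%:R : F) != 1.
  apply/negP => /eqP e; have : (1 : F) = 2%:R - 1 by ring.
  by rewrite e subrr => /eqP; rewrite oner_eq0.
have h5 : (5%:R : F) = 0.
  have k := key _ h21.
  have : (180%:R : F) = 0 by rewrite -k; ring.
  rewrite (_ : 180 = 2 * 2 * 3 * 3 * 5)%N // !natrM => /eqP.
  by rewrite !mulf_eq0 (negbTE hchar) (negbTE h3) /= => /eqP.
have prod0 (t : F) : t * (t - 1) * (t - 2%:R) * (t - 3%:R) * (t - 4%:R) = 0.
  have [->|t1] := eqVneq t 1; first by rewrite subrr !(mulr0, mul0r).
  have -> : t * (t - 1) * (t - 2%:R) * (t - 3%:R) * (t - 4%:R) =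
     (t ^+ 2 - 1) * (6%:R * t * (t ^+ 2 + 1)) +
     5%:R * (- t ^+ 5 - 2%:R * t ^+ 4 + 7%:R * t ^+ 3 - 10%:R * t ^+ 2 + 6%:R * t)
     by ring.
  by rewrite key // h5 mul0r addr0.
have modF n : ((n %% 5)%N%:R : F) = n%:R.
  by rewrite {2}(divn_eq n 5) natrD natrM h5 mulr0 add0r.
have nz k : (0 < k < 5)%N -> (k%:R : F) != 0.
  case: k => [|[|[|[|[|k]]]]] //= _.
  - exact: oner_neq0.
  - by rewrite (_ : 4 = 2 * 2)%N // natrM mulf_neq0.
pose g (a : 'F_5) : F := (val a)%:R.
exists g; split.
- apply: bij_of.
    move=> a b; rewrite /g => e.
    case: (ltngtP (val a) (val b)) => [lt|lt|eq]; last exact: val_inj.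
    + have := nz (val b - val a)%N; rewrite subn_gt0 lt /=.
      rewrite natrB ?(ltnW lt) // e subrr eqxx => H.
      by have := H (leq_ltn_trans (leq_subr _ _) (ltn_ord b)).
    + have := nz (val a - val b)%N; rewrite subn_gt0 lt /=.
      rewrite natrB ?(ltnW lt) // e subrr eqxx => H.
      by have := H (leq_ltn_trans (leq_subr _ _) (ltn_ord a)).
  move=> t; move/eqP: (prod0 t); rewrite !mulf_eq0 !subr_eq0 -!orbA.
  case/orP=> [/eqP->|/orP[/eqP->|/orP[/eqP->|/orP[/eqP->|/eqP->]]]].
  + by exists 0.
  + by exists 1.
  + by exists (inZp 2).
  + by exists (inZp 3).
  + by exists (inZp 4).
- move=> a b; rewrite /g.
  have -> : val (a + b) = ((val a + val b) %% 5)%N by [].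
  by rewrite modF natrD.
- move=> a b; rewrite /g.
  have -> : val (a * b) = ((val a * val b) %% 5)%N by [].
  by rewrite modF natrM.
- by [].
Qed.
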